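(* In the setting described in the context, suppose that $S$ is Hilbert–Schmidt with $\|S-\hat S\|_{B_2}\le\epsilon_S$, and that $\hat P=\sum_{i,j=1}^n\theta^P_{ij}\mathring\phi_{x_i}\times\mathring\phi_{x_j}$ has coefficient matrix $\Theta_P$ satisfying $\mathrm{diag}(G_{xx^+}^\top\Theta_PG_{xx^+}-G_{xx}^\top\Theta_PG_{xx}-G_{xu}^\top\Theta_SG_{xu})\le0$ entrywise. Let $\hat v(x)=\langle\mathring\phi_x,\hat P\mathring\phi_x\rangle$ and $w(x,u)=\hat v(f(x,u))-\hat v(x)-s(h(x,u),u)$. Then $$\frac{w(x_i,u_i)}{|(x_i,u_i)|^2}\le\epsilon_S\rho(0)\quad\text{for all }i\text{ with }|(x_i,u_i)|\ne0.$$
   Context: Setting: system $x^+=f(x,u)$, $y=h(x,u)$ on bounded Lipschitz regions $\mathbb{X}\subset\mathbb{R}^{d_x}$, $\mathbb{U}\subset\mathbb{R}^{d_u}$ containing $0$, $f(0,0)=0$, $h(0,0)=0$, $f\in\mathring{C}^s(\mathbb{X}\times\mathbb{U},\mathbb{X})=\{\sum_{k=1}^{d_x+d_u}e_kf_k:f_k\in H^s(\mathbb{X}\times\mathbb{U},\mathbb{X})\}$ ($e_k(z)=z_k$, $H^s$ Sobolev) with $s\in\mathbb{N}$, $s>(d_x+d_u)/2$, and $\inf_{x,u}\lvert\mathrm{D}_xf(x,u)\rvert>0$. Kernels: $\rho:\mathbb{R}_+\to\mathbb{R}_+$ with $c_1(1+|\xi|^2)^{-s}\le|\hat\rho(\xi)|\le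 c_2(1+|\xi|^2)^{-s}$; $\mathring\kappa(x,x')=(x^\top x')\rho(|x-x'|)$, $\mathring\varkappa((x,u),(x',u'))=(x^\top x'+u^\top u')\rho(|(x,u)-(x',u')|)$, with RKHSs $\mathcal{H}_{\mathring\kappa}(\mathbb{X})$, $\mathcal{H}_{\mathring\varkappa}(\mathbb{X}\times\mathbb{U})$ and canonical features $\mathring\phi_x=\mathring\kappa(x,\cdot)$, $\mathring\varphi_{(x,u)}=\mathring\varkappa((x,u),(\cdot,\cdot))$. $S$ is a self-adjoint operator on $\mathcal{H}_{\mathring\varkappa}(\mathbb{X}\times\mathbb{U})$ with $s(h(x,u),u)=\langle\mathring\varphi_{(x,u)},S\mathring\varphi_{(x,u)}\rangle$ for all $(x,u)$. Data: $\{(x_i,u_i,x_i^+)\}_{i=1}^n$ with $x_i^+=f(x_i,u_i)$; $\hat S=\sum_{i,j=1}^n\theta^S_{ij}\mathring\varphi_{(x_i,u_i)}\times\mathring\varphi_{(x_j,u_j)}$, $\Theta_S=[\theta^S_{ij}]$; $G_{xx}=[\mathring\kappa(x_i,x_j)]$, $G_{xx^+}=[\mathring\kappa(x_i,x_j^+)]$, $G_{xu}=[\mathring\varkappa((x_i,u_i),(x_j,u_j))]$. $(g_1\times g_2)g_3=\langle g_2,g_3\rangle g_1$; $\|\cdot\|_{B_2}$ is the Hilbert–Schmidt norm. *)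

(* Defs.v *)
From HB Require Import structures.
From mathcomp Require Import all_boot all_order all_algebra.
From mathcomp Require Import all_classical all_reals ereal.
Set Implicit Arguments. Unset Strict Implicit. Unset Printing Implicit Defensive.
Import Order.TTheory GRing.Theory Num.Theory.
Local Open Scope ring_scope.
Local Open Scope classical_set_scope.

Definition inner_product (R : realType) (H : lmodType R) (ip : H -> H -> R) :=
  [/\ forall x y, ip x y = ip y x,
      forall (a : R) x y z, ip (a *: x + y) z = a * ip x z + ip y z,
      forall x, 0 <= ip x x
    & forall x, ip x x = 0 -> x = 0].

Definition self_adjoint (R : realType) (H : lmodType R) (ip : H -> H -> R)
  (T : {linear H -> H}) := forall g g', ip (T g) g' = ip g (T g').

Definition orthonormal (R : realType) (H : lmodType R) (ip : H -> H -> R)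
  (m : nat) (e : 'I_m -> H) := forall i j, ip (e i) (e j) = (i == j)%:R.

(* Hilbert--Schmidt norm: sup over finite orthonormal families of
   sqrt (sum_k |T e_k|^2); equals the usual HS norm (+oo if not HS). *)
Definition hs_norm (R : realType) (H : lmodType R) (ip : H -> H -> R)
  (T : H -> H) : \bar R :=
  ereal_sup [set r | exists m (e : 'I_m -> H), orthonormal ip e /\
     r = (Num.sqrt (\sum_(k < m) ip (T (e k)) (T (e k))))%:E].

Definition hilbert_schmidt (R : realType) (H : lmodType R) (ip : H -> H -> R)
  (T : H -> H) := (hs_norm ip T < +oo)%E.

Definition outer (R : realType) (H : lmodType R) (ip : H -> H -> R)
  (g1 g2 : H) : H -> H := fun g3 => ip g2 g3 *: g1.

Definition dotv (R : realType) (d : nat) (x y : 'rV[R]_d) : R :=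
  \sum_(i < d) x 0 i * y 0 i.
Definition enorm (R : realType) (d : nat) (x : 'rV[R]_d) : R :=
  Num.sqrt (dotv x x).

Definition kappa (R : realType) (rho : R -> R) (dx : nat) (x x' : 'rV[R]_dx) : R :=
  dotv x x' * rho (enorm (x - x')).
Definition varkappa (R : realType) (rho : R -> R) (dx du : nat)
  (x : 'rV[R]_dx) (u : 'rV[R]_du) (x' : 'rV[R]_dx) (u' : 'rV[R]_du) : R :=
  (dotv x x' + dotv u u') * rho (enorm (row_mx x u - row_mx x' u')).

(* Main.v *)
Require Import Defs.
From HB Require Import structures.
From mathcomp Require Import all_boot all_order all_algebra.
From mathcomp Require Import all_classical all_reals ereal.
From mathcomp Require Import ring lra.
Import Order.TTheory GRing.Theory Num.Theory.
Local Open Scope ring_scope.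
Local Open Scope classical_set_scope.

Set Implicit Arguments.
Section IP.
Variables (R : realType) (H : lmodType R) (ip : H -> H -> R).
Hypothesis Hip : inner_product ip.

Lemma ipC x y : ip x y = ip y x. Proof. by case: Hip. Qed.
Lemma ipDZl a x y z : ip (a *: x + y) z = a * ip x z + ip y z.
Proof. by case: Hip. Qed.
Lemma ip_ge0 x : 0 <= ip x x. Proof. by case: Hip. Qed.
Lemma ip_eq0 x : ip x x = 0 -> x = 0. Proof. by case: Hip => _ _ _ K; apply: K. Qed.
Lemma ip0l z : ip 0 z = 0.
Proof. have := ipDZl 1 0 0 z. rewrite scaler0 addr0 mul1r => h. lra. Qed.
Lemma ipDl x y z : ip (x + y) z = ip x z + ip y z.
Proof. by have := ipDZl 1 x y z; rewrite scale1r mul1r. Qed.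
Lemma ipZl a x z : ip (a *: x) z = a * ip x z.
Proof. by have := ipDZl a x 0 z; rewrite addr0 ip0l addr0. Qed.
Lemma ip0r z : ip z 0 = 0. Proof. by rewrite ipC ip0l. Qed.
Lemma ipDr x y z : ip z (x + y) = ip z x + ip z y.
Proof. by rewrite ipC ipDl !(ipC _ z). Qed.
Lemma ipZr a x z : ip z (a *: x) = a * ip z x.
Proof. by rewrite ipC ipZl ipC. Qed.
Lemma ipNr x z : ip z (- x) = - ip z x.
Proof. by rewrite -scaleN1r ipZr mulN1r. Qed.
Lemma ipBr x y z : ip z (x - y) = ip z x - ip z y.
Proof. by rewrite ipDr ipNr. Qed.
Lemma ip_sumr n (F : 'I_n -> H) a : ip a (\sum_(i < n) F i) = \sum_(i < n) ip a (F i).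
Proof.
elim/big_rec2: _ => [|i y1 y2 _ <-]; first by rewrite ip0r.
by rewrite ipDr.
Qed.

Lemma ip_outer2 n (T : 'M[R]_n) (b : 'I_n -> H) a g :
  ip a (\sum_(i<n) \sum_(j<n) T i j *: outer ip (b i) (b j) g)
  = \sum_(i<n) \sum_(j<n) T i j * (ip (b j) g * ip a (b i)).
Proof.
rewrite ip_sumr; apply eq_bigr => i _; rewrite ip_sumr; apply eq_bigr => j _.
by rewrite /outer !ipZr.
Qed.

Lemma outer2Z n (T : 'M[R]_n) (b : 'I_n -> H) c g :
  \sum_(i<n) \sum_(j<n) T i j *: outer ip (b i) (b j) (c *: g)
  = c *: \sum_(i<n) \sum_(j<n) T i j *: outer ip (b i) (b j) g.
Proof.
rewrite scaler_sumr; apply eq_bigr => i _; rewrite scaler_sumr; apply eq_bigr => j _.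
by rewrite /outer ipZr !scalerA; congr (_ *: _); ring.
Qed.

Lemma CS x y : - ip x y <= Num.sqrt (ip x x) * Num.sqrt (ip y y).
Proof.
set b := Num.sqrt (ip x x); set a := Num.sqrt (ip y y).
have hb : b ^+ 2 = ip x x by rewrite sqr_sqrtr ?ip_ge0.
have ha : a ^+ 2 = ip y y by rewrite sqr_sqrtr ?ip_ge0.
have a0 : 0 <= a by apply: sqrtr_ge0.
have b0 : 0 <= b by apply: sqrtr_ge0.
have := ip_ge0 (a *: x + b *: y).
rewrite ipDl !ipZl !ipDr !ipZr (ipC y x) -ha -hb => h.
have [ab0|] := boolP (0 < a * b); first by nra.
rewrite -leNgt => hab.
have : a * b = 0 by apply/eqP; rewrite eq_le hab mulr_ge0.
move/eqP; rewrite mulf_eq0 => /orP [/eqP|/eqP] e0.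
- have y0 : y = 0 by apply: ip_eq0; rewrite -ha e0 expr0n.
  by rewrite y0 ip0r oppr0 mulr_ge0.
- have x0 : x = 0 by apply: ip_eq0; rewrite -hb e0 expr0n.
  by rewrite x0 ip0l oppr0 mulr_ge0.
Qed.
End IP.

Lemma diag_form (R : realType) n (A T : 'M[R]_n) l :
  (A^T *m T *m A) l l = \sum_(i<n) \sum_(j<n) A i l * T i j * A j l.
Proof.
rewrite mxE. under eq_bigr do rewrite mxE big_distrl.
rewrite exchange_big; apply eq_bigr => i _; apply eq_bigr => j _.
by rewrite mxE.
Qed.

Lemma dotv_ge0 (R : realType) d (x : 'rV[R]_d) : 0 <= dotv x x.
Proof. by apply: sumr_ge0 => i _; rewrite -expr2 sqr_ge0. Qed.

Lemma dotv_row (R : realType) m k (x : 'rV[R]_m) (u : 'rV[R]_k) :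
  dotv (row_mx x u) (row_mx x u) = dotv x x + dotv u u.
Proof. by rewrite /dotv big_split_ord /=; congr (_ + _); apply eq_bigr => i _; rewrite ?row_mxEl ?row_mxEr. Qed.

Lemma enorm0 (R : realType) d : enorm (0 : 'rV[R]_d) = 0.
Proof. by rewrite /enorm /dotv big1 ?sqrtr0 // => i _; rewrite mxE mul0r. Qed.

Theorem corollary4
  (R : realType) (dx du dy : nat)
  (X : set 'rV[R]_dx) (U : set 'rV[R]_du)
  (f : 'rV[R]_dx -> 'rV[R]_du -> 'rV[R]_dx)
  (h : 'rV[R]_dx -> 'rV[R]_du -> 'rV[R]_dy)
  (s : 'rV[R]_dy -> 'rV[R]_du -> R)
  (rho : R -> R)
  (H1 : lmodType R) (ip1 : H1 -> H1 -> R) (phi : 'rV[R]_dx -> H1)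
  (H2 : lmodType R) (ip2 : H2 -> H2 -> R) (varphi : 'rV[R]_dx -> 'rV[R]_du -> H2)
  (S : {linear H2 -> H2})
  (n : nat) (xs : 'I_n -> 'rV[R]_dx) (us : 'I_n -> 'rV[R]_du)
  (xps : 'I_n -> 'rV[R]_dx)
  (ThetaS ThetaP : 'M[R]_n) (epsS : R) :
  (* standing assumptions *)
  X 0 -> U 0 ->
  (forall x u, X x -> U u -> X (f x u)) ->
  f 0 0 = 0 -> h 0 0 = 0 ->
  (forall r, 0 <= r -> 0 <= rho r) ->
  (* RKHS of kappa on X and of varkappa on X x U, with canonical features *)
  inner_product ip1 ->
  (forall x x', X x -> X x' -> ip1 (phi x) (phi x') = kappa rho x x') ->
  inner_product ip2 ->
  (forall x u x' u', X x -> U u -> X x' -> U u' ->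
     ip2 (varphi x u) (varphi x' u') = varkappa rho x u x' u') ->
  (* S self-adjoint representing s *)
  self_adjoint ip2 S ->
  (forall x u, X x -> U u -> s (h x u) u = ip2 (varphi x u) (S (varphi x u))) ->
  (* data *)
  (forall i, X (xs i)) -> (forall i, U (us i)) ->
  (forall i, xps i = f (xs i) (us i)) ->
  (* S Hilbert--Schmidt, ||S - Shat||_B2 <= epsS *)
  let Shat : H2 -> H2 := fun g =>
    \sum_(i < n) \sum_(j < n)
      ThetaS i j *: outer ip2 (varphi (xs i) (us i)) (varphi (xs j) (us j)) g in
  hilbert_schmidt ip2 S ->
  (hs_norm ip2 (fun g => (S g - Shat g)%R) <= epsS%:E)%E ->
  (* Gram matrices and LMI-type diagonal condition on ThetaP *)
  let Gxx : 'M[R]_n := \matrix_(i, j) kappa rho (xs i) (xs j) in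
  let Gxxp : 'M[R]_n := \matrix_(i, j) kappa rho (xs i) (xps j) in
  let Gxu : 'M[R]_n :=
    \matrix_(i, j) varkappa rho (xs i) (us i) (xs j) (us j) in
  (forall i, (Gxxp^T *m ThetaP *m Gxxp - Gxx^T *m ThetaP *m Gxx
              - Gxu^T *m ThetaS *m Gxu) i i <= 0) ->
  let Phat : H1 -> H1 := fun g =>
    \sum_(i < n) \sum_(j < n) ThetaP i j *: outer ip1 (phi (xs i)) (phi (xs j)) g in
  let vhat : 'rV[R]_dx -> R := fun x => ip1 (phi x) (Phat (phi x)) in
  let w : 'rV[R]_dx -> 'rV[R]_du -> R :=
    fun x u => vhat (f x u) - vhat x - s (h x u) u in
  forall i, enorm (row_mx (xs i) (us i)) != 0 ->
    w (xs i) (us i) / enorm (row_mx (xs i) (us i)) ^+ 2 <= epsS * rho 0.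
Proof.
move=> X0 U0 fX f00 h00 rho0 Hip1 Hk Hip2 Hvk Hsa Hs HX HU Hxp Shat HS Hhs
  Gxx Gxxp Gxu Hdiag Phat vhat w l Hl.
set z := row_mx (xs l) (us l).
set ph := varphi (xs l) (us l).
set E := fun g => S g - Shat g.
set y := E ph.
have eqD : forall A B C : 'M[R]_n, (A - B - C) l l = A l l - B l l - C l l
  by move=> A B C; rewrite !mxE.
have Hd := Hdiag l; rewrite eqD in Hd.
have V1 : vhat (f (xs l) (us l)) = (Gxxp^T *m ThetaP *m Gxxp) l l.
  rewrite /vhat /Phat ip_outer2 // diag_form; apply eq_bigr => i _; apply eq_bigr => j _.
  rewrite /Gxxp !mxE Hxp (ipC Hip1 (phi (f _ _))) !Hk //; try (by apply: fX); ring.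
have V2 : vhat (xs l) = (Gxx^T *m ThetaP *m Gxx) l l.
  rewrite /vhat /Phat ip_outer2 // diag_form; apply eq_bigr => i _; apply eq_bigr => j _.
  rewrite /Gxx !mxE (ipC Hip1 (phi (xs l))) !Hk //; ring.
have V3 : s (h (xs l) (us l)) (us l) = (Gxu^T *m ThetaS *m Gxu) l l + ip2 ph y.
  rewrite Hs // -/ph.
  have -> : S ph = Shat ph + y by rewrite /y /E addrC subrK.
  rewrite (ipDr Hip2) /Shat ip_outer2 // diag_form; congr (_ + _).
  apply eq_bigr => i _; apply eq_bigr => j _.
  rewrite /Gxu !mxE (ipC Hip2 ph) !Hvk //; ring.
set c := Num.sqrt (ip2 ph ph).
set q := Num.sqrt (ip2 y y).
have c0 : 0 <= c by apply: sqrtr_ge0.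
have q0 : 0 <= q by apply: sqrtr_ge0.
have CSb : - ip2 ph y <= c * q by apply: CS.
have Hc2 : c ^+ 2 = enorm z ^+ 2 * rho 0.
  rewrite sqr_sqrtr ?(ip_ge0 Hip2) // /ph Hvk // /varkappa subrr enorm0 /z /enorm sqr_sqrtr ?dotv_ge0 //.
  by rewrite dotv_row.
have B5 : c * q <= epsS * c ^+ 2.
  have [cz|cpos] := eqVneq c 0; first by rewrite cz mul0r expr0n mulr0.
  have cp : 0 < c by rewrite lt_def cpos c0.
  pose e := fun _ : 'I_1 => c^-1 *: ph.
  have Hon : Defs.orthonormal ip2 e.
    move=> i j; rewrite (ord1 i) (ord1 j) eqxx /e (ipZl Hip2) (ipZr Hip2).
    rewrite -[ip2 ph ph]sqr_sqrtr ?(ip_ge0 Hip2) // -/c /=; field; rewrite gt_eqF //.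
  have hsub : ((Num.sqrt (\sum_(k < 1) ip2 (E (e k)) (E (e k))))%:E
      <= hs_norm ip2 E)%E.
    by apply: ereal_sup_ubound; exists 1%N, e; split; [exact: Hon | ].
  have := le_trans hsub Hhs; rewrite lee_fin big_ord1.
  have -> : E (e ord0) = c^-1 *: y.
    by rewrite /E /e /y /E linearZ /= /Shat outer2Z // scalerBr.
  rewrite (ipZl Hip2) (ipZr Hip2) mulrA -expr2 sqrtrM ?sqr_ge0 // sqrtr_sqr.
  rewrite ger0_norm ?invr_ge0 // -/q => hq.
  have -> : c * q = c ^+ 2 * (c^-1 * q) by field; rewrite gt_eqF //.
  by rewrite mulrC ler_wpM2r // sqr_ge0.
have hN : 0 < enorm z ^+ 2 by rewrite lt_def sqrf_eq0 Hl sqr_ge0.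
rewrite ler_pdivrMr // /w V1 V2 V3.
have : epsS * c ^+ 2 = epsS * rho 0 * enorm z ^+ 2 by rewrite Hc2; ring.
lra.
Qed.
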